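(* Let $S$ be a semigroup and $p$ a congruence on $S$. If $\{S_k : k\in K\}$ is a family of congruence classes of $S$ modulo $p$ and $U=\bigcup_{k\in K}S_k$, then $\mathrm{Sep}\,U$ is either empty or a union of some congruence classes of $S$ modulo $p$.
   Context: For a semigroup $S$ and a subset $A\subseteq S$, the idealizer of $A$ is $\mathrm{Id}\,A=\{x\in S:\ xA\subseteq A,\ Ax\subseteq A\}$, and the separator of $A$ is $\mathrm{Sep}\,A=\mathrm{Id}\,A\cap \mathrm{Id}(S\setminus A)$, i.e. the set of all $x\in S$ with $xA\subseteq A$, $Ax\subseteq A$, $x(S\setminus A)\subseteq S\setminus A$ and $(S\setminus A)x\subseteq S\setminus A$. *)

(* Defs.v *)
From Stdlib Require Import Setoid.

Definition associative {S : Type} (mul : S -> S -> S) : Prop :=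
  forall x y z, mul x (mul y z) = mul (mul x y) z.

Definition is_congruence {S : Type} (mul : S -> S -> S) (p : S -> S -> Prop) : Prop :=
  (forall a, p a a) /\ (forall a b, p a b -> p b a) /\
  (forall a b c, p a b -> p b c -> p a c) /\
  (forall a b c, p a b -> p (mul c a) (mul c b) /\ p (mul a c) (mul b c)).

Definition cclass {S : Type} (p : S -> S -> Prop) (a : S) : S -> Prop :=
  fun x => p a x.

Definition Id {S : Type} (mul : S -> S -> S) (A : S -> Prop) : S -> Prop :=
  fun x => (forall a, A a -> A (mul x a)) /\ (forall a, A a -> A (mul a x)).

Definition Sep {S : Type} (mul : S -> S -> S) (A : S -> Prop) : S -> Prop :=
  fun x => Id mul A x /\ Id mul (fun y => ~ A y) x.

(* Main.v *)
Require Import Defs.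

Theorem theorem1 (S : Type) (mul : S -> S -> S) (Hassoc : associative mul)
  (p : S -> S -> Prop) (Hp : is_congruence mul p)
  (K : Type) (c : K -> S) :
  let U : S -> Prop := fun x => exists k : K, cclass p (c k) x in
  (forall x, ~ Sep mul U x) \/
  (exists R : S -> Prop,
     forall x, Sep mul U x <-> exists r, R r /\ cclass p r x).
Proof.
  intros U. right. exists (Sep mul U).
  destruct Hp as [Hr [Hs [Ht Hc]]].
  assert (Usat : forall a b, p a b -> U a -> U b).
  { intros a b Hab [k Hk]. exists k. unfold cclass in *. eauto. }
  intros x; split.
  - intros H. exists x. split; [exact H| apply Hr].
  - intros [r [[[H1 H2] [H3 H4]] Hrx]]. unfold cclass in Hrx.
    split; split; intros a Ha.
    + apply (Usat (mul r a)); [apply (Hc r x a Hrx)| auto].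
    + apply (Usat (mul a r)); [apply (Hc r x a Hrx)| auto].
    + intro Hy. apply (H3 a Ha). apply (Usat (mul x a)); [apply Hs, (Hc r x a Hrx)| auto].
    + intro Hy. apply (H4 a Ha). apply (Usat (mul a x)); [apply Hs, (Hc r x a Hrx)| auto].
Qed.
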